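(* Let $\alpha\in\mathbb N^n$ and let $\mathcal A=\{u_1,\ldots,u_m\}$ be a set of monomials of degree $d$ in $S=K[x_1,\ldots,x_n]$. Then $\mathcal A$ is sortable if and only if $\mathcal A^\alpha$ is sortable.
   Context: $\mathbb N$ denotes the positive integers. For $\alpha=(k_1,\ldots,k_n)$, $S^\alpha=K[x_{ij}:1\le i\le n,1\le j\le k_i]$, $\pi:S^\alpha\to S$, $x_{ij}\mapsto x_i$, and $\mathcal A^\alpha$ is the set of monomials $w\in S^\alpha$ with $\pi(w)\in\mathcal A$. Sorting: for a totally ordered set of variables and monomials $u,v$ of degree $d$, write $uv=z_1z_2\cdots z_{2d}$ with variables $z_1\le z_2\le\cdots\le z_{2d}$, and set $\mathrm{sort}(u,v)=(u',v')$ with $u'=\prod_{j=1}^d z_{2j-1}$, $v'=\prod_{j=1}^d z_{2j}$. A set $\mathcal B$ of degree-$d$ monomials is sortable if $\mathrm{sort}(u,v)\in\mathcal B\times\mathcal B$ for all $u,v\in\mathcal B$. In $S$ the variables are ordered $x_1<\cdots<x_n$ and in $S^\alpha$ they are ordered $x_{11}<\cdots<x_{1k_1}<\cdots<x_{n1}<\cdots<x_{nk_n}$. *)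

(* Defs.v *)
From mathcomp Require Import all_boot.

(* A monomial in m variables x_0 < x_1 < ... < x_(m-1) (ordered by index)
   is represented by its exponent vector. *)
Definition mon (m : nat) := {ffun 'I_m -> nat}.

Definition mdeg {m} (u : mon m) : nat := \sum_(i < m) u i.

Definition mmul {m} (u v : mon m) : mon m := [ffun i => u i + v i].

(* the monomial as the nondecreasing word z_1 <= z_2 <= ... of its variables *)
Definition word {m} (u : mon m) : seq 'I_m :=
  flatten [seq nseq (u x) x | x <- enum 'I_m].

Definition mon_of_seq {m} (s : seq 'I_m) : mon m := [ffun x => count_mem x s].

(* z_1 z_3 z_5 ... (1-indexed odd positions) and z_2 z_4 ... *)
Definition odd_pos {T} (s : seq T) : seq T :=
  mask [seq ~~ odd i | i <- iota 0 (size s)] s.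
Definition even_pos {T} (s : seq T) : seq T :=
  mask [seq odd i | i <- iota 0 (size s)] s.

Definition sort1 {m} (u v : mon m) : mon m := mon_of_seq (odd_pos (word (mmul u v))).
Definition sort2 {m} (u v : mon m) : mon m := mon_of_seq (even_pos (word (mmul u v))).

Definition sortable {m} (B : pred (mon m)) : Prop :=
  forall u v, B u -> B v -> B (sort1 u v) /\ B (sort2 u v).

(* For alpha = (k_1,...,k_n) (here k : 'I_n -> nat), S^alpha has
   N = k_1 + ... + k_n variables, indexed by 'I_N in the order
   x_11 < ... < x_1k_1 < x_21 < ... < x_nk_n.  The variable with index t
   lies in block i iff blk k i <= t < blk k i + k i; pi maps it to x_i. *)
Definition blk {n} (k : 'I_n -> nat) (i : 'I_n) : nat := \sum_(l < n | l < i) k l.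

Definition in_block {n} (k : 'I_n -> nat) (t : nat) (i : 'I_n) : bool :=
  (blk k i <= t) && (t < blk k i + k i).

Definition Ntot {n} (k : 'I_n -> nat) : nat := \sum_(i < n) k i.

Definition piMon {n} (k : 'I_n -> nat) (w : mon (Ntot k)) : mon n :=
  [ffun i => \sum_(t < Ntot k | in_block k t i) w t].

Definition polA {n} (k : 'I_n -> nat) (A : pred (mon n)) : pred (mon (Ntot k)) :=
  fun w => A (piMon k w).

(* Main.v *)
Require Import Defs.
From mathcomp Require Import all_boot.

Definition ole {m} : rel 'I_m := fun a b => (a <= b)%N.

Lemma ole_trans m : transitive (@ole m).
Proof. move=> a b c; exact: leq_trans. Qed.

Lemma ole_anti m : antisymmetric (@ole m).
Proof. move=> a b /andP[h1 h2]; apply: val_inj; apply/eqP; by rewrite eqn_leq; apply/andP. Qed.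

Lemma path_nseq m (x y : 'I_m) n r : ole x y -> path ole y r -> path ole x (nseq n y ++ r).
Proof.
elim: n x => [|n IH] x /= hxy hr.
  case: r hr => [|z r] //= /andP[hyz ->]; rewrite andbT; exact: ole_trans hxy hyz.
by rewrite hxy IH // /ole leqnn.
Qed.

Lemma path_word m (c : 'I_m -> nat) x s : path ole x s ->
  path ole x (flatten [seq nseq (c y) y | y <- s]).
Proof.
elim: s x => [|y s IH] x //= /andP[hxy hp].
by apply: path_nseq => //; apply: IH.
Qed.

Lemma sorted_word m (w : mon m) : sorted ole (word w).
Proof.
rewrite /word.
have : sorted ole (enum 'I_m).
  by have := iota_sorted 0 m; rewrite -val_enum_ord sorted_map.
case: (enum 'I_m) => [|y s] //= hp.
case: (w y) => [|n] /=; first by apply: (@path_sorted _ ole y); apply: path_word.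
by apply: path_nseq; [rewrite /ole leqnn | apply: path_word].
Qed.

Lemma count_word m (w : mon m) x : count_mem x (word w) = w x.
Proof.
rewrite /word count_flatten -map_comp.
rewrite sumnE big_map.
rewrite (eq_bigr (fun y => (y == x) * w y)); last first.
  by move=> y _ /=; rewrite count_nseq /= eq_sym mulnC.
by rewrite big_enum /= (bigD1 x) //= eqxx mul1n big1 ?addn0 // => y /negbTE ->.
Qed.


Lemma mon_of_word m (w : mon m) : mon_of_seq (word w) = w.
Proof. by apply/ffunP=> x; rewrite ffunE count_word. Qed.

Lemma word_mon_of_seq m (s : seq 'I_m) : sorted ole s -> word (mon_of_seq s) = s.
Proof.
move=> hs; apply: (sorted_eq (@ole_trans m) (@ole_anti m)) => //.
  exact: sorted_word.
apply/allP => x _ /=; have := @count_word _ (mon_of_seq s) x; by rewrite ffunE => ->.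
Qed.

Definition pf {N n} (f : 'I_N -> 'I_n) (w : mon N) : mon n :=
  [ffun i => \sum_(t | f t == i) w t].

Lemma count_sum N (a : pred 'I_N) (s : seq 'I_N) :
  count a s = \sum_(t | a t) count_mem t s.
Proof.
elim: s => [|x s IH] /=; first by rewrite big1.
rewrite IH big_split /=; congr (_ + _).
rewrite (eq_bigr (fun t => (t == x) * a x)); last first.
  by move=> t ht; rewrite eq_sym; case: (t =P x) => [e|ne]; [subst t; rewrite ht|].
rewrite -big_distrl /=.
case ax: (a x) => /=; last by rewrite muln0.
by rewrite muln1 (bigD1 x) //= eqxx big1 // => y /andP[_ /negbTE ->].
Qed.

Lemma pf_mon_of_seq N n (f : 'I_N -> 'I_n) s :
  pf f (mon_of_seq s) = mon_of_seq (map f s).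
Proof.
apply/ffunP=> i; rewrite !ffunE count_map count_sum.
by apply: eq_bigr => t _; rewrite ffunE.
Qed.

Lemma pf_mmul N n (f : 'I_N -> 'I_n) a b : pf f (mmul a b) = mmul (pf f a) (pf f b).
Proof.
apply/ffunP=> i; rewrite !ffunE -big_split /=.
by apply: eq_bigr => t _; rewrite ffunE.
Qed.

Lemma word_pf N n (f : 'I_N -> 'I_n) w :
  {homo f : x y / ole x y >-> ole x y} -> word (pf f w) = map f (word w).
Proof.
move=> hf; rewrite -{1}(@mon_of_word _ w) pf_mon_of_seq word_mon_of_seq //.
exact: homo_sorted hf _ (@sorted_word _ w).
Qed.

Lemma sort1_pf N n (f : 'I_N -> 'I_n) a b :
  {homo f : x y / ole x y >-> ole x y} -> sort1 (pf f a) (pf f b) = pf f (sort1 a b).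
Proof.
move=> hf; rewrite /sort1 -pf_mmul word_pf // pf_mon_of_seq /odd_pos map_mask size_map.
by [].
Qed.

Lemma sort2_pf N n (f : 'I_N -> 'I_n) a b :
  {homo f : x y / ole x y >-> ole x y} -> sort2 (pf f a) (pf f b) = pf f (sort2 a b).
Proof.
move=> hf; rewrite /sort2 -pf_mmul word_pf // pf_mon_of_seq /even_pos map_mask size_map.
by [].
Qed.

Definition K {n} (k : 'I_n -> nat) (l : nat) : nat :=
  if insub l is Some i then k i else 0.
Definition S {n} (k : 'I_n -> nat) (j : nat) : nat := \sum_(l < j) K k l.
Definition bn {n} (k : 'I_n -> nat) (t : nat) : nat := \sum_(j < n) (S k j.+1 <= t).

Lemma Kval n (k : 'I_n -> nat) (i : 'I_n) : K k i = k i.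
Proof. by rewrite /K valK. Qed.

Lemma SS n (k : 'I_n -> nat) j : S k j.+1 = S k j + K k j.
Proof. by rewrite /S big_ord_recr. Qed.

Lemma S0 n (k : 'I_n -> nat) : S k 0 = 0.
Proof. by rewrite /S big_ord0. Qed.

Lemma S_mono n (k : 'I_n -> nat) j1 j2 : j1 <= j2 -> S k j1 <= S k j2.
Proof.
elim: j2 => [|j2 IH]; first by rewrite leqn0 => /eqP ->.
rewrite leq_eqVlt => /orP[/eqP ->//|h].
by rewrite SS (leq_trans (IH h)) // leq_addr.
Qed.

Lemma blkS n (k : 'I_n -> nat) (i : 'I_n) : blk k i = S k i.
Proof.
rewrite /blk /S (big_ord_widen_cond n (fun _ => true) (K k)) ?(ltnW (ltn_ord i)) //=.
by apply: eq_bigr => l _; rewrite Kval.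
Qed.

Lemma NtotS n (k : 'I_n -> nat) : Ntot k = S k n.
Proof. by rewrite /Ntot /S; apply: eq_bigr => l _; rewrite Kval. Qed.

Lemma blkSS n (k : 'I_n -> nat) (i : 'I_n) : blk k i + k i = S k i.+1.
Proof. by rewrite blkS SS Kval. Qed.

Lemma bn_split n (k : 'I_n -> nat) t m : m <= n ->
  bn k t = \sum_(j < m) (S k j.+1 <= t) + \sum_(j < n | ~~ (j < m)) (S k j.+1 <= t).
Proof.
move=> hm; rewrite /bn (bigID (fun j : 'I_n => j < m)) /=; congr (_ + _).
by rewrite (big_ord_widen_cond n (fun _ => true) (fun j => (S k j.+1 <= t) : nat)).
Qed.

Lemma bn_ge n (k : 'I_n -> nat) t m : m <= n ->
  (forall j, j < m -> S k j.+1 <= t) -> m <= bn k t.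
Proof.
move=> hm hP; rewrite (@bn_split n k t m hm).
rewrite (eq_bigr (fun _ => 1)); first by rewrite sum1_card card_ord leq_addr.
by move=> j _; rewrite hP.
Qed.

Lemma bn_le n (k : 'I_n -> nat) t m : m <= n ->
  (forall j, m <= j -> t < S k j.+1) -> bn k t <= m.
Proof.
move=> hm hP; rewrite (@bn_split n k t m hm) [X in _ + X]big1 ?addn0; last first.
  by move=> j; rewrite -leqNgt => hj; rewrite leqNgt (hP j hj).
apply: (@leq_trans (\sum_(j < m) 1)); last by rewrite sum1_card card_ord.
by apply: leq_sum => j _; apply: leq_b1.
Qed.

Lemma in_blockE n (k : 'I_n -> nat) t (i : 'I_n) : in_block k t i = (bn k t == i).
Proof.
rewrite /in_block blkSS blkS.
apply/idP/eqP.
  move=> /andP[h1 h2]; apply/eqP; rewrite eqn_leq; apply/andP; split.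
    apply: bn_le; first exact: ltnW.
    move=> j hj; apply: (leq_trans h2); exact: S_mono.
  apply: bn_ge; first exact: ltnW.
  move=> j hj; apply: leq_trans h1; exact: S_mono.
move=> hb; apply/andP; split.
  rewrite leqNgt; apply/negP => h.
  have i0 : 0 < i by case: (nat_of_ord i) h hb => //; rewrite S0.
  have : bn k t <= i.-1.
    apply: bn_le; first by rewrite (leq_trans (leq_pred _)) // ltnW.
    by move=> j hj; apply: (leq_trans h); apply: S_mono; rewrite -(prednK i0).
  by rewrite hb; move: i0; case: (nat_of_ord i) => // p _; rewrite /= ltnn.
rewrite ltnNge; apply/negP => h.
have : i.+1 <= bn k t.
  apply: bn_ge => // j hj; apply: leq_trans h; exact: S_mono.
by rewrite hb ltnn.
Qed.

Lemma bn_lt n (k : 'I_n -> nat) (t : 'I_(Ntot k)) : bn k t < n.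
Proof.
have ht : (t : nat) < S k n by rewrite -NtotS.
move: ht; case: n k t => [|n] k t ht; first by rewrite S0 in ht.
rewrite ltnS; apply: bn_le => // j hj; apply: (leq_trans ht); exact: S_mono.
Qed.

Definition fb {n} (k : 'I_n -> nat) (t : 'I_(Ntot k)) : 'I_n := Ordinal (@bn_lt n k t).

Lemma fb_homo n (k : 'I_n -> nat) : {homo fb k : x y / ole x y >-> ole x y}.
Proof.
move=> x y hxy; rewrite /ole /=; apply: leq_sum => j _.
case: (S k j.+1 <= x) /idP => //= h; by rewrite (leq_trans h hxy).
Qed.

Lemma piMon_pf n (k : 'I_n -> nat) w : piMon k w = pf (fb k) w.
Proof.
apply/ffunP=> i; rewrite !ffunE; apply: eq_bigl => t.
by rewrite in_blockE.
Qed.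

Lemma pf_surj N n (f : 'I_N -> 'I_n) (g : 'I_n -> 'I_N) : cancel g f ->
  forall u : mon n, pf f [ffun t => if t == g (f t) then u (f t) else 0] = u.
Proof.
move=> gK u; apply/ffunP=> i; rewrite ffunE (bigD1 (g i)) ?gK //= ffunE gK eqxx.
rewrite big1 ?addn0 // => t /andP[/eqP hf ht]; rewrite ffunE hf.
by rewrite (negbTE ht).
Qed.

Theorem theorem2p14 (n d : nat) (k : 'I_n -> nat) (A : seq (mon n)) :
  (forall i, 0 < k i) ->
  (forall u, u \in A -> mdeg u = d) ->
  sortable (fun u => u \in A) <-> sortable (polA k (fun u => u \in A)).
Proof.
move=> hk _; split.
  move=> hA w1 w2; rewrite /polA !piMon_pf -(@sort1_pf _ _ (fb k) w1 w2 (@fb_homo n k)) -(@sort2_pf _ _ (fb k) w1 w2 (@fb_homo n k)).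
  exact: hA.
move=> hB.
have glt : forall i : 'I_n, blk k i < Ntot k.
  move=> i; rewrite NtotS; apply: (@leq_trans (S k i.+1)); last exact: S_mono.
  by rewrite -blkSS -{1}(addn0 (blk k i)) ltn_add2l.
pose g (i : 'I_n) : 'I_(Ntot k) := Ordinal (glt i).
have gK : cancel g (fb k).
  move=> i; apply: val_inj => /=; apply/eqP; rewrite -in_blockE /in_block leqnn /=.
  by rewrite -{1}(addn0 (blk k i)) ltn_add2l.
pose lift (u : mon n) : mon (Ntot k) := [ffun t => if t == g (fb k t) then u (fb k t) else 0].
have liftK : forall u, piMon k (lift u) = u by move=> u; rewrite piMon_pf pf_surj.
move=> u v hu hv.
have := hB (lift u) (lift v); rewrite /polA !liftK => /(_ hu hv) [h1 h2].
by rewrite !piMon_pf -(@sort1_pf _ _ (fb k) _ _ (@fb_homo n k)) -(@sort2_pf _ _ (fb k) _ _ (@fb_homo n k)) -!piMon_pf !liftK in h1 h2.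
Qed.
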